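(* Let $d,n,k\in\mathbb{N}^+$. Let $S_n=2^{-n+3}\{0,1,\dots,\lfloor 2^n n^{-2}\rfloor\}^d\subset\mathbb{R}^d$ and $s_n=\#S_n$. Let $\{X_i\}_{i\ge1}$ be i.i.d. random variables, each uniformly distributed on $S_n$ (i.e. $\Pr(X_i=y)=1/s_n$ for every $y\in S_n$), and let $\mathcal{F}_i=\sigma(X_j:1\le j\le i-1)$, with $\mathcal{F}_1$ trivial. Then there exists $\ell\in\mathbb{N}^+$ such that for every sequence $\{y_i\}_{i\ge1}$ of $\mathbb{R}^d$-valued random variables with $y_i$ being $\mathcal{F}_i$-measurable for each $i$, we have \[ \Pr\left(N_n\left(\bigcup_{i=1}^{\ell}\{X_i+y_i\}\right)<s_n\right)\le\frac{1}{k\,2^n}. \]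
   Context: For a subset $X\subset\mathbb{R}^d$ (Euclidean metric), $N_n(X)$ denotes the maximal cardinality of a subset $S\subset X$ such that any two distinct points of $S$ are at distance $>2^{-n}$. $\lfloor x\rfloor$ is the integer part of $x$. *)

(* Defs.v *)
From Stdlib Require Import Reals ClassicalEpsilon.
From mathcomp Require Import all_boot.
Set Implicit Arguments. Unset Strict Implicit. Unset Printing Implicit Defensive.

Local Open Scope R_scope.

Definition point (d : nat) := 'I_d -> R.

Definition edist (d : nat) (p q : point d) : R :=
  sqrt (foldr Rplus 0 (map (fun j => (p j - q j) ^ 2) (enum 'I_d))).

Definition padd (d : nat) (p q : point d) : point d := fun j => p j + q j.

Definition separated_in (d n : nat) (X : point d -> Prop) (S : list (point d)) : Prop :=
  (forall p, List.In p S -> X p) /\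
  (forall i j, (i < size S)%N -> (j < size S)%N -> i <> j ->
      edist (nth (fun _ => 0) S i) (nth (fun _ => 0) S j) > / 2 ^ n).

(* "N_n(X) < m": every 2^{-n}-separated subset of X has fewer than m points,
   i.e. the maximal cardinality N_n(X) of such subsets is < m. *)
Definition Nn_lt (d n : nat) (X : point d -> Prop) (m : nat) : Prop :=
  forall S, separated_in n X S -> (size S < m)%N.

Definition gmax (n : nat) : nat := (2 ^ n %/ n ^ 2)%N.
Definition gidx (d n : nat) : finType := {ffun 'I_d -> 'I_(gmax n).+1}.

(* The grid point 2^{-n+3} * g of S_n (the map g |-> gpt g is injective,
   so the uniform law on gidx d n is the uniform law on S_n). *)
Definition gpt (d n : nat) (g : gidx d n) : point d :=
  fun j => powerRZ 2 (3 - Z.of_nat n) * INR (nat_of_ord (g j)).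

Definition sn (d n : nat) : nat := #|gidx d n|.

(* The random set  \bigcup_{i=1}^{l} {X_i + y_i}, for the outcome xs = (X_1..X_l).
   y i is the (deterministic) function of (X_1,...,X_{i}) (0-based: of the
   prefix take i xs) giving the F_{i+1}-measurable shift of the (i+1)-th point. *)
Definition shifted_set (d n l : nat) (y : nat -> seq (gidx d n) -> point d)
  (xs : l.-tuple (gidx d n)) : point d -> Prop :=
  fun p => exists i : 'I_l, p = padd (gpt (tnth xs i)) (y (nat_of_ord i) (take i xs)).

Definition bad_event (d n l : nat) (y : nat -> seq (gidx d n) -> point d)
  (xs : l.-tuple (gidx d n)) : Prop :=
  Nn_lt n (shifted_set y xs) (sn d n).

Definition indicator (P : Prop) : bool :=
  if excluded_middle_informative P then true else false.

(* Pr(N_n(\bigcup_{i<=l} {X_i+y_i}) < s_n) under X_1..X_l i.i.d. uniform on S_n: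
   the uniform (product) probability on l-tuples of grid indices. *)
Definition prob_bad (d n l : nat) (y : nat -> seq (gidx d n) -> point d) : R :=
  INR (count (fun xs => indicator (bad_event y xs)) (enum {: l.-tuple (gidx d n)}))
  / INR #|{: l.-tuple (gidx d n)}|.

(* Main.v *)
Require Import Defs.
From Stdlib Require Import Reals Lra ClassicalEpsilon.
From mathcomp Require Import all_boot.
Set Implicit Arguments. Unset Strict Implicit. Unset Printing Implicit Defensive.
Local Open Scope R_scope.

Lemma foldr_ge (d : nat) (f : 'I_d -> R) (s : seq 'I_d) j :
  (forall i, 0 <= f i) -> j \in s -> (f j <= foldr Rplus 0 (map f s)).
Proof.
move=> H; elim: s => [//|a s IH] /=; rewrite in_cons => /orP [/eqP ->|/IH h].
- have : (0 <= foldr Rplus 0 (map f s)).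
    elim: s {IH} => [|b s' I]/=; [lra| have := H b; lra].
  lra.
- have := H a; lra.
Qed.

Lemma edist_coord (d : nat) (p q : point d) (e : R) (j : 'I_d) :
  (edist p q <= e) -> ((p j - q j) ^ 2 <= e ^ 2).
Proof.
rewrite /edist => h.
set S := foldr _ _ _ in h.
have S0 : (0 <= S).
  rewrite /S; elim: (enum (ordinal d)) => [|b s I] /=; [lra| have := pow2_ge_0 (p b - q b); simpl in *; lra].
have T : ((p j - q j) ^ 2 <= S).
  rewrite /S; apply: (@foldr_ge d (fun j => (p j - q j) ^ 2) (enum (ordinal d)) j); [move=> i; apply: pow2_ge_0| by rewrite mem_enum].
have := sqrt_sqrt S S0; have := sqrt_pos S => h1 h2.
have : (sqrt S * sqrt S <= e * e) by apply: Rmult_le_compat.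
nra.
Qed.

Lemma powerRZ_eq (n : nat) : powerRZ 2 (3 - Z.of_nat n) = (8 * / 2 ^ n).
Proof.
rewrite /Z.sub powerRZ_add; last lra.
rewrite powerRZ_neg; last lra.
rewrite -pow_powerRZ. simpl. rewrite pow_inv. lra.
Qed.

Definition closeb (d n : nat) (p q : point d) : bool :=
  if Rlt_dec (/ 2 ^ n) (edist p q) then false else true.

Lemma closeb_le d n (p q : point d) : closeb n p q -> edist p q <= / 2 ^ n.
Proof. rewrite /closeb; case: Rlt_dec => // h _; lra. Qed.

Lemma close_uniq d n (c a : point d) (x1 x2 : gidx d n) :
  closeb n (padd (gpt x1) c) a || closeb n a (padd (gpt x1) c) ->
  closeb n (padd (gpt x2) c) a || closeb n a (padd (gpt x2) c) -> x1 = x2.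
Proof.
have e0 : 0 < / 2 ^ n by apply: Rinv_0_lt_compat; apply: pow_lt; lra.
set e := / 2 ^ n in e0 *.
have key : forall x : gidx d n, closeb n (padd (gpt x) c) a || closeb n a (padd (gpt x) c) ->
   forall j, (8 * e * INR (x j) + c j - a j) ^ 2 <= e ^ 2.
  move=> x /orP [] /closeb_le /edist_coord h j; have := h j;
  rewrite /padd /gpt powerRZ_eq -/e; nra.
move=> h1 h2; apply/ffunP => j; apply: val_inj.
have := key _ h1 j; have := key _ h2 j => k2 k1.
set u1 := nat_of_ord (x1 j) in k1 *; set u2 := nat_of_ord (x2 j) in k2 *.
rewrite /=; apply/eqP; rewrite eqn_leq; apply/andP; split; rewrite leqNgt; apply/negP => /ltP lt.
- have : (INR u2 + 1 <= INR u1) by rewrite -S_INR; apply: le_INR.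
  move=> h.
  have : 8 * e * INR u1 + c j - a j <= e by nra.
  have : - e <= 8 * e * INR u2 + c j - a j by nra.
  have : e <= e * (INR u1 - INR u2) by nra.
  lra.
- have : (INR u1 + 1 <= INR u2) by rewrite -S_INR; apply: le_INR.
  move=> h.
  have : 8 * e * INR u2 + c j - a j <= e by nra.
  have : - e <= 8 * e * INR u1 + c j - a j by nra.
  have : e <= e * (INR u2 - INR u1) by nra.
  lra.
Qed.

Local Open Scope nat_scope.
From mathcomp Require Import zify.

Section Comb.
Variables (d n : nat) (y : nat -> seq (gidx d n) -> point d).
Local Notation G := (gidx d n).

Definition farb (q : point d) (A : seq (point d)) : bool :=
  all (fun a => ~~ closeb n q a && ~~ closeb n a q) A.

Fixpoint go (hist : seq G) (A : seq (point d)) (rest : seq G) {struct rest} : seq (point d) :=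
  match rest with
  | [::] => A
  | x :: r => let q := padd (gpt x) (y (size hist) hist) in
      go (rcons hist x) (if farb q A then rcons A q else A) r
  end.

Fixpoint lists (l : nat) : seq (seq G) :=
  if l is l'.+1 then [seq x :: r | x <- enum G, r <- lists l'] else [:: [::]].

Lemma size_lists l : size (lists l) = #|G| ^ l.
Proof. elim: l => [//|l IH] /=; by rewrite size_allpairs IH -cardT expnS. Qed.

Lemma mem_lists l r : (r \in lists l) = (size r == l).
Proof.
elim: l r => [|l IH] r /=; first by case: r.
apply/allpairsP/idP => [[[x r'] /= [_ h ->]]|].
  by rewrite /= eqSS -IH.
case: r => [//|x r] /=; rewrite eqSS -IH => h.
by exists (x, r); rewrite mem_enum.
Qed.

Lemma uniq_lists l : uniq (lists l).
Proof.
elim: l => [//|l IH] /=; apply: allpairs_uniq => //; first exact: enum_uniq.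
by move=> [a b] [c e] _ _ /= [-> ->].
Qed.

Lemma go_mono hist A r : size A <= size (go hist A r).
Proof.
elim: r hist A => [//|x r IH] hist A /=.
apply: leq_trans (IH _ _); case: ifP => //; rewrite size_rcons //.
Qed.

Lemma count_fail (c : point d) (A : seq (point d)) :
  count (fun x : G => ~~ farb (padd (gpt x) c) A) (enum G) <= size A.
Proof.
elim: A => [|a A IH] /=; first by rewrite count_pred0.
set p1 := (fun x : G => closeb n (padd (gpt x) c) a || closeb n a (padd (gpt x) c)).
have -> : count (fun x : G => ~~ ((~~ closeb n (padd (gpt x) c) a && ~~ closeb n a (padd (gpt x) c)) &&
     all (fun a0 => ~~ closeb n (padd (gpt x) c) a0 && ~~ closeb n a0 (padd (gpt x) c)) A)) (enum G)
   = count (predU p1 (fun x : G => ~~ farb (padd (gpt x) c) A)) (enum G).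
  apply: eq_count => x; rewrite /= /p1 /farb negb_and negb_and !negbK //.
have h1 : count p1 (enum G) <= 1.
  case: (pickP p1) => [x0 px0|p0].
    apply: leq_trans (_ : count (pred1 x0) (enum G) <= 1).
      apply: sub_count => x px; apply/eqP; exact: close_uniq px px0.
    by rewrite count_uniq_mem ?enum_uniq // mem_enum.
  by rewrite (eq_count p0) count_pred0.
have := count_predUI p1 (fun x : G => ~~ farb (padd (gpt x) c) A) (enum G).
lia.
Qed.


Lemma sumn_mulr c (f : G -> nat) e : c * sumn (map f e) = sumn [seq c * f x | x <- e].
Proof. by elim: e => [|x e IH] /=; rewrite ?muln0 // mulnDr IH. Qed.

Lemma sumn_le (f g : G -> nat) e : (forall x, f x <= g x) -> sumn (map f e) <= sumn (map g e).
Proof. by move=> h; elim: e => [|x e IH] //=; apply: leq_add. Qed.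

Lemma sum_aux (e : seq G) (b : G -> bool) m K L : 0 < m ->
  sumn [seq (m - b x) * K + L | x <- e] + count b e * K = size e * (m * K + L).
Proof.
move=> m0; elim: e => [//|x e IH] /=.
have e1 : (m - b x) * K + b x * K = m * K.
  by rewrite -mulnDl subnK //; apply: leq_trans (leq_b1 _) m0.
rewrite mulSn -IH mulnDl -e1.
move: ((m - b x) * K) (b x * K) (count b e * K) (sumn _) => P Q T R; lia.
Qed.

Lemma card_G_gt0 : 0 < #|G|.
Proof. by apply/card_gt0P; exists [ffun=> ord0]. Qed.

Lemma bound l : forall hist A,
  l.+1 * count (fun r => size (go hist A r) < #|G|) (lists l) <= (#|G| - size A) * #|G| ^ l.+1.
Proof.
have s0 := card_G_gt0.
set s := #|G| in s0 *.
elim: l => [|l IH] hist A.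
  rewrite /= addn0 mul1n expn1; case: ltnP => h //=.
  by rewrite muln_gt0 subn_gt0 h.
case: (leqP s (size A)) => hA.
  rewrite (@eq_count _ _ pred0) ?count_pred0 ?muln0 // => r /=.
  by apply/negbTE; rewrite -leqNgt; apply: leq_trans hA (go_mono _ _ _).
set m := s - size A.
have m0 : 0 < m by rewrite subn_gt0.
set b := fun x : G => farb (padd (gpt x) (y (size hist) hist)) A.
rewrite [lists _]/= count_flatten -map_comp sumn_mulr.
apply: leq_trans (@sumn_le _ (fun x => (m - b x) * s ^ l.+1 + s ^ l) _ _) _.
  move=> x /=; rewrite count_map.
  set A' := (if b x then rcons A (padd (gpt x) (y (size hist) hist)) else A).
  have hI := IH (rcons hist x) A'.
  have hC := count_size (fun r : seq G => size (go (rcons hist x) A' r) < s) (lists l).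
  rewrite size_lists in hC.
  apply: (@leq_trans (l.+2 * count (fun r => size (go (rcons hist x) A' r) < s) (lists l)));
    first exact: leqnn.
  move: hI hC; move: (count _ _) => C hI hC.
  move: hI.
  have -> : s - size A' = m - b x.
    by rewrite /A' /m; case: (b x); rewrite ?size_rcons ?subn0 // subnS subn1.
  move=> h; rewrite mulSn addnC; exact: leq_add.
have hsum := sum_aux (enum G) b (s ^ l.+1) (s ^ l) m0.
rewrite -cardT -/s in hsum.
have hcb : m <= count b (enum G).
  have := count_fail (y (size hist) hist) A.
  have := count_predC b (enum G); rewrite -cardT -/s.
  have -> : count (predC b) (enum G) = count (fun x : G => ~~ farb (padd (gpt x) (y (size hist) hist)) A) (enum G) by [].
  rewrite /m; lia.
have hK : s ^ l.+1 <= count b (enum G) * s ^ l.+1.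
  by rewrite leq_pmull //; apply: leq_trans hcb.
have hsl : s * s ^ l = s ^ l.+1 by rewrite expnS.
have hs2 : m * s ^ l.+2 = s * (m * s ^ l.+1) by rewrite expnS mulnCA.
rewrite hs2; move: hsum hK; rewrite mulnDr hsl.
move: (s * (m * s ^ l.+1)) => Z; move: (count b (enum G) * s ^ l.+1) => Y; move: (sumn _) => X; move: (s ^ l.+1) => K.
lia.
Qed.

End Comb.

Local Open Scope R_scope.

Lemma not_closeb d n (p q : point d) : ~~ closeb n p q -> edist p q > / 2 ^ n.
Proof. by rewrite /closeb; case: Rlt_dec. Qed.

Lemma In_rcons T (A : seq T) q p : List.In p (rcons A q) -> List.In p A \/ p = q.
Proof. rewrite -cats1 => /List.in_app_iff [h|[h|[]]]; [left|right] => //. Qed.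

Lemma go_sep d n (y : nat -> seq (gidx d n) -> point d) (x0 : gidx d n) (X : point d -> Prop)
  hist A rest :
  (forall j, (j < size rest)%N ->
     X (padd (gpt (nth x0 rest j)) (y (size hist + j)%N (hist ++ take j rest)))) ->
  separated_in n X A -> separated_in n X (go y hist A rest).
Proof.
elim: rest hist A => [//|x r IH] hist A H [HA1 HA2] /=.
apply: IH.
  move=> j hj; have := H j.+1 hj; rewrite /= size_rcons addSnnS cat_rcons //.
have Hq := H 0%N isT; rewrite addn0 take0 cats0 /= in Hq.
case: ifP => hf; last by split.
split.
  move=> p hp; case: (In_rcons hp) => [/HA1|->] //.
move=> i j; rewrite size_rcons !ltnS => hi hj ij.
have [ei|li] : i = size A \/ (i < size A)%N by lia.
all: have [ej|lj] : j = size A \/ (j < size A)%N by lia.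
all: rewrite !nth_rcons.
- by exfalso; apply: ij; rewrite ei ej.
- rewrite ei ltnn eqxx lj.
  move/(all_nthP (fun _ : 'I_d => 0)): hf => /(_ j lj) /andP [h1 _]; exact: not_closeb.
- rewrite ej ltnn eqxx li.
  move/(all_nthP (fun _ : 'I_d => 0)): hf => /(_ i li) /andP [_ h2]; exact: not_closeb.
- rewrite li lj; exact: HA2.
Qed.

Lemma INR_expn a b : INR (a ^ b)%N = INR a ^ b.
Proof. elim: b => [|b IH]; first by rewrite expn0. rewrite expnS -multE mult_INR IH. reflexivity. Qed.

Lemma real_fin a K S : 0 < K -> 0 < S -> a * K <= S -> a / S <= / K.
Proof.
move=> K0 S0 h.
have e : a / S = (a * K) * (/ S * / K) by field; lra.
have -> : / K = S * (/ S * / K) by field; lra.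
rewrite e.
apply: Rmult_le_compat_r => //.
apply: Rmult_le_pos; left; apply: Rinv_0_lt_compat => //.
Qed.

Unset Implicit Arguments.
Theorem mainTheorem8 (d n k : nat) (hd : (0 < d)%N) (hn : (0 < n)%N) (hk : (0 < k)%N) :
  exists l : nat, (0 < l)%N /\
    forall y : nat -> seq (gidx d n) -> point d,
      Rle (@prob_bad d n l y) (Rinv (INR k * pow 2 n)).
Proof.
have s0 := @card_G_gt0 d n.
set s := #|gidx d n| in s0.
pose x0 : gidx d n := [ffun=> ord0].
exists (s ^ 2 * k * 2 ^ n)%N; split.
  by rewrite !muln_gt0 expn_gt0 s0 hk.
move=> y.
set l := (s ^ 2 * k * 2 ^ n)%N.
pose gbad := fun r : seq (gidx d n) => (size (go y [::] [::] r) < s)%N.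
rewrite /prob_bad card_tuple.
set cnt := count _ _.
have hcnt : (cnt <= count gbad (lists d n l))%N.
  have hperm : perm_eq (map val (enum {: l.-tuple (gidx d n)})) (lists d n l).
    apply: uniq_perm.
    - rewrite map_inj_uniq ?enum_uniq //; exact: val_inj.
    - exact: uniq_lists.
    - move=> r; rewrite mem_lists; apply/mapP/idP => [[t _ ->]|h]; first by rewrite size_tuple.
      by exists (Tuple h); rewrite ?mem_enum.
  rewrite /cnt -(permP hperm) (count_map val gbad); apply: sub_count => xs /=.
  rewrite /indicator; case: excluded_middle_informative => // hb _.
  apply: hb; apply: (@go_sep d n y x0).
    move=> j hj; rewrite size_tuple in hj.
    exists (Ordinal hj); rewrite (tnth_nth x0) add0n cat0s //.
  by split; [move=> p [] | move=> i j].
have hb := bound y l [::] [::].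
rewrite subn0 -/s in hb.
have hnat : (cnt * (k * 2 ^ n) <= s ^ l)%N.
  rewrite -(@leq_pmul2l (s ^ 2)) ?expn_gt0 ?s0 //.
  apply: leq_trans (_ : l.+1 * count gbad (lists d n l) <= _)%N.
    rewrite mulnC -mulnA mulnC mulnA. apply: leq_mul => //.
    rewrite /l; nia.
  apply: leq_trans hb _.
  by rewrite !expnS expn0 muln1 mulnA.
apply: real_fin.
- apply: Rmult_lt_0_compat; first by apply: lt_0_INR; apply/ltP.
  apply: pow_lt; lra.
- rewrite INR_expn; apply: pow_lt; apply: lt_0_INR; apply/ltP.
  done.
- have := le_INR _ _ (elimT leP hnat).
  rewrite -!multE !mult_INR !INR_expn.
  by have -> : INR 2 = 2 by simpl; lra.
Qed.
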